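(* Let $p\in(0,1)$ and let $(\lambda_n)_{n\ge1}$ be a sequence with $\lambda_1=1$ and $0\le\lambda_n\le\lambda_{n-1}$ for all $n>1$. Let $r_1,r_2,\dots$ be $\{0,1\}$-valued random variables with $\Pr(r_1=1)=p$ and, for every $n\ge2$, $\Pr(r_n=1\mid r_1,\dots,r_{n-1})=\lambda_n p+(1-\lambda_n)\bar p_{n-1}$, where $\bar p_m=\frac1m\sum_{i=1}^m r_i$. Then for all integers $1\le m<n$, \[\mathbb{E}[\bar p_n-p\mid\bar p_m]=(\bar p_m-p)\prod_{i=m+1}^{n}\Big(1-\frac{\lambda_i}{i}\Big).\] *)

(* Defs.v *)
From HB Require Import structures.
From mathcomp Require Import all_boot all_order all_algebra.
From mathcomp Require Import all_classical all_reals all_analysis.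
Set Implicit Arguments. Unset Strict Implicit. Unset Printing Implicit Defensive.
Import Order.TTheory GRing.Theory Num.Theory.
Local Open Scope classical_set_scope.
Local Open Scope ring_scope.

Definition pbar {T : Type} {R : realType} (r : nat -> T -> bool) (m : nat) (w : T) : R :=
  (\sum_(1 <= i < m.+1) ((r i w : nat)%:R : R)) / m%:R.

(* It is only meaningful (and only used) P-almost surely. *)
Definition cond_exp_discrete {d} {T : measurableType d} {R : realType}
  (P : probability T R) (X : T -> R) {U : Type} (Y : T -> U) (w : T) : R :=
  fine (\int[P]_(x in [set x | Y x = Y w]) (X x)%:E)
  / fine (P [set x | Y x = Y w]).

Definition prefix_event {T : Type} (r : nat -> T -> bool) (s : seq bool) : set T :=
  [set w | forall i, (1 <= i <= size s)%N -> r i w = nth false s i.-1].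

(* Main.v *)
Require Import Defs.
From HB Require Import structures.
From mathcomp Require Import all_boot all_order all_algebra.
From mathcomp Require Import all_classical all_reals all_analysis.
From mathcomp Require Import ring lra.
Import Order.TTheory GRing.Theory Num.Theory.
Local Open Scope classical_set_scope.
Local Open Scope ring_scope.

Fixpoint allb (k : nat) : seq (seq bool) :=
  if k is k'.+1 then [seq rcons s b | s <- allb k', b <- [:: true; false]]
  else [:: [::]].

Lemma allbS k : allb k.+1 = [seq rcons s b | s <- allb k, b <- [:: true; false]].
Proof. by []. Qed.

Lemma mem_allb k s : (s \in allb k) = (size s == k).
Proof.
elim: k s => [|k IH] s; first by case: s.
rewrite allbS; apply/idP/idP.
  by case/allpairsP => [[s1 b]] /= [s1in _ ->]; rewrite size_rcons eqSS -IH.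
case/lastP: s => [|s b]; first by [].
rewrite size_rcons eqSS -IH => sin.
by apply/allpairsP; exists (s, b); split => //; case: b.
Qed.

Lemma uniq_allb k : uniq (allb k).
Proof.
elim: k => [//|k IH]; rewrite allbS.
apply: allpairs_uniq => //.
by move=> [s1 b1] [s2 b2] _ _ /= /rcons_inj [-> ->].
Qed.

Lemma big_allbS (R : Type) (idx : R) (op : Monoid.law idx) k (F : seq bool -> R) :
  \big[op/idx]_(s <- allb k.+1) F s =
  \big[op/idx]_(s <- allb k) op (F (rcons s true)) (F (rcons s false)).
Proof.
rewrite allbS big_allpairs_dep; apply: eq_bigr => s _.
by rewrite big_cons big_cons big_nil Monoid.mulm1.
Qed.

Section Comb.
Variables (R : realType) (q : seq bool -> R) (lambda : nat -> R) (p : R)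
  (m : nat) (g : seq bool -> bool).
Definition M (k : nat) (s : seq bool) : R := (count id s)%:R / k%:R.
Definition cc (s : seq bool) : R :=
  lambda (size s).+1 * p + (1 - lambda (size s).+1) * M (size s) s.
Hypothesis qT : forall s, q (rcons s true) = cc s * q s.
Hypothesis qF : forall s, q (rcons s false) = (1 - cc s) * q s.

Definition Z k := \sum_(s <- allb k) (if g (take m s) then q s else 0).
Definition Y k := \sum_(s <- allb k) (if g (take m s) then (M k s - p) * q s else 0).

Lemma take_rcons_le (s : seq bool) b : (m <= size s)%N -> take m (rcons s b) = take m s.
Proof. by move=> h; rewrite -cats1 takel_cat. Qed.

Lemma ZS k : (m <= k)%N -> Z k.+1 = Z k.
Proof.
move=> mk; rewrite /Z big_allbS big_seq [RHS]big_seq; apply: eq_bigr => s.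
rewrite mem_allb => /eqP sk; rewrite !take_rcons_le ?sk //.
by case: ifP => _ /=; [rewrite qT qF; ring | rewrite addr0].
Qed.

Lemma YS k : (m <= k)%N -> (0 < k)%N ->
  Y k.+1 = (1 - lambda k.+1 / k.+1%:R) * Y k.
Proof.
move=> mk k0; rewrite /Y big_allbS mulr_sumr big_seq [RHS]big_seq; apply: eq_bigr => s.
rewrite mem_allb => /eqP sk; rewrite !take_rcons_le ?sk //.
case: ifP => _ /=; last by rewrite addr0 mulr0.
rewrite qT qF /cc /M -!cats1 !count_cat /= sk addn0 !natrD.
have kn0 : (k%:R : R) != 0 by rewrite pnatr_eq0 -lt0n.
have kn1 : (k%:R + 1 : R) != 0 by rewrite -[1]/(1%:R) -natrD pnatr_eq0 addn1.
set lam := lambda k.+1; rewrite -[k.+1]addn1 natrD; by field; rewrite kn0 kn1.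
Qed.

Lemma YZ v k : g =1 (fun s => M m s == v) -> (0 < m)%N -> (m <= k)%N ->
  Y k = (v - p) * (\prod_(m.+1 <= i < k.+1) (1 - lambda i / i%:R)) * Z k.
Proof.
move=> gE m0 /subnK <-; elim: (k - m)%N => [|j IH].
  rewrite add0n big_geq // mulr1 /Y /Z mulr_sumr big_seq [RHS]big_seq.
  apply: eq_bigr => s; rewrite mem_allb => /eqP sm.
  rewrite take_oversize ?sm // gE; case: eqP => [->|_]; last by rewrite mulr0.
  by [].
rewrite addSn [in RHS]big_nat_recr /= ?ltnS ?leq_addl //.
rewrite YS ?ZS ?IH ?leq_addl ?(leq_trans m0) ?leq_addl //; ring.
Qed.
End Comb.
Definition bits {T : Type} (r : nat -> T -> bool) k (w : T) : seq bool :=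
  [seq r i w | i <- iota 1 k].

Lemma size_bits T (r : nat -> T -> bool) k w : size (bits r k w) = k.
Proof. by rewrite size_map size_iota. Qed.

Lemma pevE T (r : nat -> T -> bool) s :
  prefix_event r s = [set w | bits r (size s) w = s].
Proof.
apply/seteqP; split => w /=.
  move=> h; apply: (@eq_from_nth _ false); first by rewrite size_bits.
  move=> i; rewrite size_bits => ilt.
  by rewrite (nth_map 0) ?size_iota // nth_iota // h //= add1n ltnS.
move=> <- i /andP[i1 ile]; rewrite size_bits in ile.
by rewrite (nth_map 0) ?size_iota ?nth_iota ?add1n ?prednK.
Qed.

Lemma bitsS T (r : nat -> T -> bool) k w : bits r k.+1 w = rcons (bits r k w) (r k.+1 w).
Proof. rewrite /bits -[k.+1]addn1 iotaD map_cat cats1 add1n.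
by rewrite addn1. Qed.

Lemma take_bits T (r : nat -> T -> bool) j k w : (j <= k)%N ->
  take j (bits r k w) = bits r j w.
Proof. by move=> jk; rewrite /bits -map_take take_iota (minn_idPl jk). Qed.

Lemma mem_bigsetU (I : eqType) (T : Type) (l : seq I) (Q : pred I) (F : I -> set T) x :
  (\big[setU/set0]_(i <- l | Q i) F i) x <-> exists i, [/\ i \in l, Q i & F i x].
Proof.
elim: l => [|a l IH]; first by rewrite big_nil; split => [[]|[i []]].

rewrite big_cons; split.
  case: ifP => Qa.
    case=> [Fa|/IH [i [il Qi Fi]]]; first by exists a; rewrite mem_head.
    by exists i; rewrite in_cons il orbT.
  by move=> /IH [i [il Qi Fi]]; exists i; rewrite in_cons il orbT.
move=> [i [+ Qi Fi]]; rewrite in_cons => /orP [/eqP iE|il].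
  by subst i; rewrite Qi; left.
by case: ifP => _; [right|]; apply/IH; exists i.
Qed.

Section Meas.
Context d (T : measurableType d) (R : realType) (P : probability T R) (r : nat -> T -> bool).
Hypothesis mr : forall n, (1 <= n)%N -> measurable [set w | r n w].

Lemma prefix_meas s : measurable (prefix_event r s).
Proof.
have -> : prefix_event r s = \bigcap_i (if (1 <= i <= size s)%N
    then [set w | r i w = nth false s i.-1] else setT).
  apply/seteqP; split => w /=.
    by move=> h i _; case: ifP => // /h.
  by move=> h i ic; have := h i I; rewrite ic.
apply: bigcapT_measurable => i; case: ifP => // /andP[i1 _].
case: (nth false s i.-1); first exact: mr.
have -> : [set w | r i w = false] = ~` [set w | r i w].
  by apply/seteqP; split => w /=; case: (r i w).
exact/measurableC/mr.
Qed.

Lemma meas_bits k (Q : seq bool -> Prop) : measurable [set x | Q (bits r k x)].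
Proof.
have -> : [set x | Q (bits r k x)] =
    \big[setU/set0]_(s <- allb k | `[< Q s >]) prefix_event r s.
  apply/seteqP; split => x /=.
    move=> Qx; apply/mem_bigsetU; exists (bits r k x); split.
    - by rewrite mem_allb size_bits.
    - exact/asboolP.
    - by rewrite pevE /= size_bits.
  move=> /mem_bigsetU [s [+ /asboolP Qs]]; rewrite mem_allb => /eqP sk.
  by rewrite pevE /= sk => ->.
by apply: bigsetU_measurable => s _; exact: prefix_meas.
Qed.

Lemma mfun_bits (h : seq bool -> R) k : measurable_fun setT (fun x => h (bits r k x)).
Proof.
move=> _ Y mY; rewrite setTI; exact: (meas_bits k (fun s => Y (h s))).
Qed.

Lemma int_bits (h : seq bool -> R) k :
  (\int[P]_x (h (bits r k x))%:E =
   \sum_(s <- allb k) (h s)%:E * P (prefix_event r s))%E.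
Proof.
have cover : [set: T] = \big[setU/set0]_(s <- allb k) prefix_event r s.
  apply/seteqP; split => x // _; apply/mem_bigsetU; exists (bits r k x); split => //.
    by rewrite mem_allb size_bits.
  by rewrite pevE /= size_bits.
rewrite cover integral_bigsetU_EFin.
- apply: eq_big_seq => s; rewrite mem_allb => /eqP sk.
  rewrite (@eq_integral _ _ _ _ _ (cst (h s)%:E)) ?integral_cst //.
    exact: prefix_meas.
  by move=> x; rewrite inE pevE /= sk => ->.
- exact: prefix_meas.
- exact: uniq_allb.
- move=> s1 s2 /= s1in s2in [x [h1 h2]].
  move: h1 h2; rewrite !pevE /=.
  move: s1in s2in; rewrite !mem_allb => /eqP -> /eqP ->.
  by move=> -> ->.
- by rewrite -cover; apply/measurable_realfun.measurable_EFinP; exact: mfun_bits.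
Qed.


Lemma pev_rcons s b : prefix_event r (rcons s b) =
  prefix_event r s `&` [set w | r (size s).+1 w = b].
Proof.
rewrite !pevE size_rcons; apply/seteqP; split => w /=; rewrite bitsS.
  by move=> /rcons_inj [-> ->].
by move=> [-> ->].
Qed.

Lemma count_sum (f : nat -> bool) l :
  (count f l)%:R = \sum_(i <- l) ((f i : nat)%:R : R).
Proof.
elim: l => [|a l IH]; first by rewrite big_nil.
by rewrite big_cons /= natrD IH.
Qed.

Lemma pbarE j x : pbar (R:=R) r j x = M R j (bits r j x).
Proof.
rewrite /pbar /M /bits count_map count_sum /index_iota subSS subn0.
by [].
Qed.
End Meas.

Theorem propositionA7 (d : measure_display) (T : measurableType d) (R : realType)
  (P : probability T R) (p : R) (lambda : nat -> R) (r : nat -> T -> bool) :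
  0 < p < 1 ->
  lambda 1%N = 1 ->
  (forall n, (1 < n)%N -> 0 <= lambda n <= lambda n.-1) ->
  (forall n, (1 <= n)%N -> measurable [set w | r n w]) ->
  P [set w | r 1%N w] = p%:E ->
  (forall n (s : seq bool), (2 <= n)%N -> size s = n.-1 ->
     P (prefix_event r s `&` [set w | r n w])
     = ((lambda n * p + (1 - lambda n) * ((count id s)%:R / (n.-1)%:R))%:E
        * P (prefix_event r s))%E) ->
  forall m n : nat, (1 <= m)%N -> (m < n)%N ->
  {ae P, forall w,
     cond_exp_discrete P (fun x => @pbar T R r n x - p) (@pbar T R r m) w
     = (@pbar T R r m w - p) * \prod_(m.+1 <= i < n.+1) (1 - lambda i / i%:R)}.
Proof.
move=> /andP[p0 p1] lam1 lamH mr Pr1 Hc m n m1 mn.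
set q := fun s => fine (P (prefix_event r s)).
have Pq : forall s, P (prefix_event r s) = (q s)%:E.
  by move=> s; rewrite /q fineK // fin_num_measure //; exact: prefix_meas.
have qT : forall s, q (rcons s true) = cc R lambda p s * q s.
  move=> s; rewrite /q /= pev_rcons.
  case: s => [|b s].
    have -> : prefix_event r [::] = setT by rewrite pevE; apply/seteqP; split.
    rewrite setTI /= Pr1 probability_setT /cc /= lam1 subrr mul0r addr0 mulr1.
    by rewrite mul1r.
  rewrite (Hc (size (b :: s)).+1) //= Pq -EFinM /=.
  by rewrite /cc /M.
have qF : forall s, q (rcons s false) = (1 - cc R lambda p s) * q s.
  move=> s; rewrite /q /= pev_rcons.
  have -> : prefix_event r s `&` [set w | r (size s).+1 w = false] =
      prefix_event r s `\` [set w | r (size s).+1 w].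
    by apply/seteqP; split => w /= [h1 h2]; split => //; move: h2; case: (r _ w).
  rewrite measureD; [|exact: prefix_meas|exact: mr|by rewrite ltey_eq fin_num_measure //; exact: prefix_meas].
  have := qT s; rewrite /q /= pev_rcons => qTs.
  rewrite -[X in (_ - X)%E]fineK ?fin_num_measure //; last first.
    by apply: measurableI; [exact: prefix_meas|exact: mr].
  rewrite qTs Pq -EFinB /=; ring.
have pbm : forall j x, @pbar T R r j x = M R j (bits r j x).
  by move=> j x; apply: pbarE.
have measA : forall v : R, measurable [set x | @pbar T R r m x = v].
  move=> v; have -> : [set x | @pbar T R r m x = v] =
      [set x | (fun s => M R m s = v) (bits r m x)].
    by apply/seteqP; split => x /=; rewrite pbm.
  exact: (@meas_bits _ _ r mr m (fun s => M R m s = v)).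
pose good := fun w => P [set x | @pbar T R r m x = @pbar T R r m w] != 0.
have main : forall w, good w ->
    cond_exp_discrete P (fun x => @pbar T R r n x - p) (@pbar T R r m) w
     = (@pbar T R r m w - p) * \prod_(m.+1 <= i < n.+1) (1 - lambda i / i%:R).
  move=> w; rewrite /good /cond_exp_discrete.
  set v := pbar r m w.
  set A := [set x | pbar r m x = v].
  pose g := fun s => M R m s == v.
  have hA : forall x, (x \in A) = g (take m (bits r n x)).
    move=> x; rewrite take_bits; last exact: ltnW.
    rewrite /g -pbm.
    by apply/idP/eqP => [/set_mem //|h]; exact: mem_set.
  have I1 : (\int[P]_(x in A) (pbar r n x - p)%:E = (Y R q p m g n)%:E)%E.
    rewrite integral_mkcond (eq_integral
      (fun x => ((fun s => if g (take m s) then M R n s - p else 0) (bits r n x))%:E)).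
      rewrite (@int_bits _ _ _ P r mr (fun s => if g (take m s) then M R n s - p else 0) n).
      under eq_bigr do rewrite Pq -EFinM.
      rewrite sumEFin /Y; congr EFin; apply: eq_bigr => s _.
      by case: ifP => _; rewrite ?mul0r.
    by move=> x _; rewrite patchE hA /=; case: ifP => _ //; rewrite pbm.
  have I2 : P A = (Z R q m g n)%:E.
    rewrite -[A]setIT -integral_indic //; last exact: measA.
    rewrite (eq_integral
      (fun x => ((fun s => if g (take m s) then 1 else 0) (bits r n x))%:E)).
      rewrite (@int_bits _ _ _ P r mr (fun s => if g (take m s) then 1 else 0) n).
      under eq_bigr do rewrite Pq -EFinM.
      rewrite sumEFin /Z; congr EFin; apply: eq_bigr => s _.
      by case: ifP => _; rewrite ?mul0r ?mul1r.
    by move=> x _; rewrite indicE hA /=; case: ifP.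
  rewrite I1 I2 /= => Z0.
  rewrite (@YZ R q lambda p m g qT qF v n (fun _ => erefl)) //; last exact: ltnW.
  by rewrite mulfK.
have neg : P.-negligible (\big[setU/set0]_(s <- allb m | P (prefix_event r s) == 0)
    prefix_event r s).
  elim/big_ind: _ => [|A B|s /eqP Ps0]; [exact: negligible_set0|exact: negligibleU|].
  by exists (prefix_event r s); split => //; exact: (@prefix_meas _ _ r mr).
apply: (negligibleS _ neg) => w /= nQ.
have ngw : ~~ good w by apply/negP => /main.
apply/mem_bigsetU; exists (bits r m w); split.
- by rewrite mem_allb size_bits.
- rewrite -measure_le0.
  have PA0 : P [set x | @pbar T R r m x = @pbar T R r m w] = 0.
    by apply/eqP; move: ngw; rewrite negbK.
  rewrite -PA0; apply: le_measure; rewrite ?inE.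
  + exact: (@prefix_meas _ _ r mr).
  + exact: measA.
  + by move=> x; rewrite pevE /= size_bits => h; rewrite !pbm h.
- by rewrite pevE /= size_bits.
Qed.
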